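(* Let $t>0$ be an integer. There is a constant $C_t$ such that the following holds. Let $G=(A\cup B,E,<)$ be a bipartite ordered graph with parts $A,B$ such that $A<B$. If there are no $t$-element subsets $A'\subseteq A$ and $B'\subseteq B$ such that every $a\in A'$ and $b\in B'$ form a double cherry in $G$, then $|E|\le C_t(|A|+|B|)$.
   Context: An ordered graph is a graph with a linear order on its vertices. $A<B$ means $a<b$ for all $a\in A$, $b\in B$. Two distinct vertices of an ordered graph form a double cherry if either they are adjacent, or they can be named $u,v$ so that there are vertices $u_1,u_2,v_1,v_2$ with $u_1<u<u_2<v_1<v<v_2$ and edges $(u,v_1),(u,v_2),(v,u_1),(v,u_2)$ in the graph. *)

(* Defs.v *)
(* An ordered graph on n vertices is modelled on 'I_n with the
   natural order; its edges are given by a symmetric irreflexive relation. *)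
From mathcomp Require Import all_boot all_order.
Set Implicit Arguments. Unset Strict Implicit. Unset Printing Implicit Defensive.

Definition simple_graph (n : nat) (e : rel 'I_n) : Prop :=
  (forall x y, e x y = e y x) /\ (forall x, ~~ e x x).

Definition edges (n : nat) (e : rel 'I_n) : {set 'I_n * 'I_n} :=
  [set p : 'I_n * 'I_n | (p.1 < p.2)%N && e p.1 p.2].

Definition cherry_config (n : nat) (e : rel 'I_n) (u v : 'I_n) : Prop :=
  exists u1 u2 v1 v2 : 'I_n,
    [/\ (u1 < u)%N, (u < u2)%N, (u2 < v1)%N, (v1 < v)%N & (v < v2)%N] /\
    [/\ e u v1, e u v2, e v u1 & e v u2].

Definition double_cherry (n : nat) (e : rel 'I_n) (x y : 'I_n) : Prop :=
  x != y /\ (e x y \/ cherry_config e x y \/ cherry_config e y x).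

Definition bipartite_ordered (n : nat) (e : rel 'I_n) (A B : {set 'I_n}) : Prop :=
  [/\ simple_graph e,
      A :|: B = [set: 'I_n],
      (forall a b, a \in A -> b \in B -> (a < b)%N) &
      (forall x y, e x y -> (x \in A) && (y \in B) || (x \in B) && (y \in A))].

(* Main.v *)
Require Import Defs.
From mathcomp Require Import all_boot all_order zify.
Set Implicit Arguments. Unset Strict Implicit. Unset Printing Implicit Defensive.
Lemma count_fib (X Y : finType) (S : {set X}) (T : {set Y}) (R : X -> Y -> bool) k :
  (forall x, x \in S -> exists2 y, y \in T & R x y) ->
  (forall y, y \in T -> #|[set x in S | R x y]| <= k) ->
  #|S| <= k * #|T|.
Proof.
move=> HS HT.
have -> : #|S| = \sum_(x in S) 1 by rewrite sum1_card.
apply: (@leq_trans (\sum_(x in S) \sum_(y in T) (R x y : nat))).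
  apply: leq_sum => x xS; case: (HS x xS) => y yT Rxy.
  by rewrite (bigD1 y) //= Rxy.
rewrite exchange_big /= mulnC -sum_nat_const.
apply: leq_sum => y yT.
apply: leq_trans (HT y yT).
rewrite -sum1_card big_mkcond /= [X in _ <= X]big_mkcond /=.
apply: leq_sum => x _; rewrite !inE.
by case: (x \in S); case: (R x y).
Qed.

Lemma card_lt (T : finType) (S : {set T}) (f : T -> nat) L :
  {in S &, injective f} -> (forall x, x \in S -> f x < L) -> #|S| <= L.
Proof.
move=> inj lt.
pose g (x : T) : 'I_L.+1 := inord (f x).
have ginj : {in S &, injective g}.
  move=> x y xS yS E; apply: inj => //; move: (congr1 (@nat_of_ord _) E); rewrite /g !inordK //.
  - by apply: ltnW; apply: lt.
  - by apply: ltnW; apply: lt.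
rewrite -(card_in_imset ginj).
apply: leq_trans (_ : #|[set~ (@ord_max L)]| <= L); last by rewrite cardsC1 card_ord.
apply: subset_leq_card; apply/subsetP => _ /imsetP [x xS ->].
rewrite !inE; apply/eqP => /(congr1 (@nat_of_ord _)); rewrite /g inordK /=.
  by move=> E; have := lt x xS; rewrite E ltnn.
by apply: ltnW; apply: lt.
Qed.

Lemma card_near (T : finType) (S : {set T}) (f : T -> nat) L :
  {in S &, injective f} -> (forall x y, x \in S -> y \in S -> f x < f y + L) ->
  #|S| <= L + L.
Proof.
move=> inj near.
case: (set_0Vmem S) => [-> | [x0 x0S]]; first by rewrite cards0.
apply: (@card_lt _ _ (fun x => f x + L - f x0)).
  move=> x y xS yS /= E.
  apply: inj => //.
  have h1 := near x0 x x0S xS; have h2 := near x0 y x0S yS.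
  lia.
move=> x xS /=.
have h1 := near x x0 xS x0S.
rewrite ltn_subLR; last by apply: ltnW; apply: near.
lia.
Qed.

Lemma count2 (X Y Z : finType) (S : {set X}) (T1 : {set Y}) (T2 : {set Z})
  (R1 : X -> Y -> bool) (R2 : X -> Z -> bool) k1 k2 :
  (forall x, x \in S -> (exists2 y, y \in T1 & R1 x y) \/ (exists2 z, z \in T2 & R2 x z)) ->
  (forall y, y \in T1 -> #|[set x in S | R1 x y]| <= k1) ->
  (forall z, z \in T2 -> #|[set x in S | R2 x z]| <= k2) ->
  #|S| <= k1 * #|T1| + k2 * #|T2|.
Proof.
move=> HS H1 H2.
pose S1 := [set x in S | [exists y in T1, R1 x y]].
pose S2 := [set x in S | [exists z in T2, R2 x z]].
have sub : S \subset S1 :|: S2.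
  apply/subsetP => x xS; rewrite !inE xS /=.
  case: (HS x xS) => [[y yT Ry]|[z zT Rz]].
    by apply/orP; left; apply/existsP; exists y; rewrite yT.
  by apply/orP; right; apply/existsP; exists z; rewrite zT.
apply: leq_trans (subset_leq_card sub) _.
apply: leq_trans (leq_card_setU _ _) _.
apply: leq_add.
  apply: (@count_fib _ _ _ _ R1).
    move=> x; rewrite inE => /andP [_ /existsP [y /andP [yT Ry]]]; by exists y.
  move=> y yT; apply: leq_trans (H1 y yT); apply: subset_leq_card.
  by apply/subsetP => x; rewrite !inE => /andP [/andP [xS _] Rx]; rewrite xS Rx.
apply: (@count_fib _ _ _ _ R2).
  move=> x; rewrite inE => /andP [_ /existsP [z /andP [zT Rz]]]; by exists z.
move=> z zT; apply: leq_trans (H2 z zT); apply: subset_leq_card.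
by apply/subsetP => x; rewrite !inE => /andP [/andP [xS _] Rx]; rewrite xS Rx.
Qed.

Lemma first_fail (P : nat -> bool) m : P 0 -> ~~ P m -> exists2 j, j < m & P j && ~~ P j.+1.
Proof.
move=> P0; elim: m => [|m IH] Pm; first by rewrite P0 in Pm.
case: (boolP (P m)) => Pm'.
  by exists m => //; rewrite Pm' Pm.
by case: (IH Pm') => j jm Pj; exists j => //; apply: ltnW.
Qed.

Lemma first_fail_range (P : nat -> bool) a b : a <= b -> P a -> ~~ P b ->
  exists y, [/\ a < y, y <= b, P y.-1 & ~~ P y].
Proof.
move=> ab Pa Pb.
have := @first_fail (fun i => P (a + i)) (b - a).
rewrite addn0 subnKC // => /(_ Pa Pb) [j jlt /andP [Pj Pj1]].
exists (a + j).+1; split => //; [lia | lia| by rewrite -addnS].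
Qed.
Section Main.
Variable n : nat.
Variable e : rel 'I_n.
Variables A B : {set 'I_n}.

Definition RC (a c : 'I_n) : bool :=
  [exists v : 'I_n, e a v && (v <= c)] && [exists v : 'I_n, e a v && (c <= v)].
Definition act (c : 'I_n) (y : nat) : bool :=
  [exists u : 'I_n, e c u && (u <= y)] && [exists u : 'I_n, e c u && (y <= u)].
Definition H (a c : 'I_n) : bool := [&& a \in A, c \in B, RC a c & act c a].

Lemma RC_mid a (x z w : 'I_n) : RC a x -> RC a z -> x <= w <= z -> RC a w.
Proof.
case/andP => /existsP [v1 /andP [e1 l1]] _ /andP [_ /existsP [v2 /andP [e2 l2]]] /andP [xw wz].
apply/andP; split; apply/existsP.
  by exists v1; rewrite e1 /=; apply: leq_trans l1 xw.
by exists v2; rewrite e2 /=; apply: leq_trans wz l2.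
Qed.

Lemma act_mid c (x z w : nat) : act c x -> act c z -> x <= w <= z -> act c w.
Proof.
case/andP => /existsP [v1 /andP [e1 l1]] _ /andP [_ /existsP [v2 /andP [e2 l2]]] /andP [xw wz].
apply/andP; split; apply/existsP.
  by exists v1; rewrite e1 /=; apply: leq_trans l1 xw.
by exists v2; rewrite e2 /=; apply: leq_trans wz l2.
Qed.

Definition adj (y : nat) (c d : 'I_n) : bool :=
  [&& d \in B, c < d, act d y &
      [forall x : 'I_n, ((x \in B) && (c < x) && (x < d)) ==> ~~ act x y]].

Lemma adj_uniq (y : nat) (c d1 d2 : 'I_n) : adj y c d1 -> adj y c d2 -> d1 = d2.
Proof.
move=> /and4P [B1 c1 a1 /forallP F1] /and4P [B2 c2 a2 /forallP F2].
case: (ltngtP d1 d2) => [lt|lt|eq]; last by apply: val_inj.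
  by have := F2 d1; rewrite B1 c1 lt a1.
by have := F1 d2; rewrite B2 c2 lt a2.
Qed.

Lemma adj_exists (y : nat) (c d : 'I_n) : d \in B -> c < d -> act d y -> exists d', adj y c d'.
Proof.
move=> dB cd ad.
pose P (m : nat) := [exists x : 'I_n, [&& x \in B, c < x, act x y & nat_of_ord x == m]].
have exP : exists m, P m by exists (nat_of_ord d); apply/existsP; exists d; rewrite dB cd ad eqxx.
case: (ex_minnP exP) => m /existsP [x /and4P [xB cx ax /eqP xm]] mmin.
exists x; rewrite /adj xB cx ax /=; apply/forallP => z; apply/implyP => /andP [/andP [zB cz] zx].
apply/negP => az.
have : m <= z by apply: mmin; apply/existsP; exists z; rewrite zB cz az eqxx.
by rewrite -xm leqNgt zx.
Qed.

Definition nextc (y : nat) (c : 'I_n) : option 'I_n := [pick d | adj y c d].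
Definition nx (y : nat) (c : 'I_n) := odflt c (nextc y c).

Lemma nextc_adj (y : nat) (c d : 'I_n) : nextc y c = Some d -> adj y c d.
Proof. by rewrite /nextc; case: pickP => // x Ax [<-]. Qed.

Lemma nextc_eq (y : nat) (c d : 'I_n) : adj y c d -> nextc y c = Some d.
Proof.
move=> Ad; rewrite /nextc; case: pickP => [x Ax|/(_ d)]; last by rewrite Ad.
by rewrite (adj_uniq Ax Ad).
Qed.

Lemma nx_adj (y : nat) (c d : 'I_n) : adj y c d -> nx y c = d.
Proof. by move=> Ad; rewrite /nx (nextc_eq Ad). Qed.

Lemma nextc_None (y : nat) (c d : 'I_n) : nextc y c = None -> d \in B -> c < d -> act d y -> False.
Proof.
move=> N dB cd ad; case: (adj_exists dB cd ad) => d' Ad'.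
by rewrite (nextc_eq Ad') in N.
Qed.

Definition predc (y : nat) (d : 'I_n) : 'I_n :=
  odflt d [pick c | (c \in B) && act c y && adj y c d].

Lemma predc_adj (y : nat) (c d : 'I_n) : c \in B -> act c y -> adj y c d -> predc y d = c.
Proof.
move=> cB ac Ad; rewrite /predc; case: pickP => [x /andP [/andP [xB ax] Ax]|/(_ c)]; last first.
  by rewrite cB ac Ad.
move: Ax Ad => /and4P [_ xd _ /forallP Fx] /and4P [_ cd _ /forallP Fc] /=.
case: (ltngtP x c) => [lt|lt|eq]; last by apply: val_inj.
  by have := Fx c; rewrite cB lt cd ac.
by have := Fc x; rewrite xB lt xd ax.
Qed.


Definition s (b : 'I_n) : seq 'I_n := [seq a <- enum 'I_n | H a b].

Lemma mem_s a b : (a \in s b) = H a b.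
Proof. by rewrite mem_filter mem_enum andbT. Qed.

Lemma uniq_s b : uniq (s b).
Proof. by rewrite filter_uniq // enum_uniq. Qed.

Lemma sorted_s b : sorted (fun x y : 'I_n => x < y) (s b).
Proof.
apply: sorted_filter; first by move=> x y z; apply: ltn_trans.
have := iota_ltn_sorted 0 n; rewrite -val_enum_ord sorted_map.
by [].
Qed.

Lemma s_lt b (x0 : 'I_n) i j : i < j -> j < size (s b) -> nth x0 (s b) i < nth x0 (s b) j.
Proof.
move=> ij js.
have := @sorted_ltn_nth _ (fun x y : 'I_n => x < y) (fun x y z => @ltn_trans _ _ _) x0 (s b) (sorted_s b).
by apply => //; rewrite inE //; apply: ltn_trans js.
Qed.

Lemma s_le b (x0 : 'I_n) i j : i <= j -> j < size (s b) -> nth x0 (s b) i <= nth x0 (s b) j.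
Proof.
rewrite leq_eqVlt => /orP [/eqP -> //| ij js].
by apply: ltnW; apply: s_lt.
Qed.

Variable t : nat.

Definition kk (a0 b : 'I_n) := index a0 (s b).
Definition wrow (a0 b : 'I_n) (i : nat) := nth b (s b) (kk a0 b + i).
Definition y1 (a0 b : 'I_n) := wrow a0 b t.-1.
Definition cj (a0 b : 'I_n) (j : nat) := iter j (nx a0) b.
Definition inW (a0 b a : 'I_n) := [exists i : 'I_t, a == wrow a0 b i].
Definition win (a0 b : 'I_n) := H a0 b && (kk a0 b + t <= size (s b)).

Definition stepadj (a0 b : 'I_n) (i : nat) :=
  [forall y : 'I_n, (a0 <= y <= y1 a0 b) ==> adj y (cj a0 b i) (cj a0 b i.+1)].
Definition stepRC (a0 b : 'I_n) (i : nat) :=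
  [forall a, inW a0 b a ==> RC a (cj a0 b i)].

Fixpoint goodw (a0 b : 'I_n) (j : nat) : bool :=
  match j with
  | 0 => stepRC a0 b 0
  | j'.+1 => [&& goodw a0 b j', stepadj a0 b j' & stepRC a0 b j'.+1]
  end.

Lemma goodw_adj a0 b j i : goodw a0 b j -> i < j -> stepadj a0 b i.
Proof.
elim: j => [//|j IH] /= /and3P [g sa _].
rewrite ltnS leq_eqVlt => /orP [/eqP -> //|]; exact: IH.
Qed.

Lemma goodw_RC a0 b j i : goodw a0 b j -> i <= j -> stepRC a0 b i.
Proof.
elim: j => [|j IH] /=; first by move=> g; rewrite leqn0 => /eqP ->.
move=> /and3P [g _ sr]; rewrite leq_eqVlt => /orP [/eqP -> //|]; exact: IH.
Qed.

Section Win.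
Variables a0 b : 'I_n.
Hypothesis Hw : win a0 b.
Hypothesis tpos : 0 < t.

Lemma win_H : H a0 b. Proof. by case/andP: Hw. Qed.
Lemma win_mem : a0 \in s b. Proof. by rewrite mem_s win_H. Qed.
Lemma win_size : kk a0 b + t <= size (s b). Proof. by case/andP: Hw. Qed.

Lemma wrow0 : wrow a0 b 0 = a0.
Proof. by rewrite /wrow addn0 /kk nth_index // win_mem. Qed.

Lemma wrow_mem i : i < t -> wrow a0 b i \in s b.
Proof.
move=> it; rewrite /wrow mem_nth //.
by apply: leq_trans win_size; rewrite ltn_add2l.
Qed.

Lemma wrow_H i : i < t -> H (wrow a0 b i) b.
Proof. by move=> it; rewrite -mem_s wrow_mem. Qed.

Lemma wrow_span i : i < t -> a0 <= wrow a0 b i <= y1 a0 b.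
Proof.
move=> it; apply/andP; split.
  rewrite -{1}wrow0; apply: s_le; first by rewrite leq_add2l.
  by apply: leq_trans win_size; rewrite ltn_add2l.
apply: s_le; first by rewrite leq_add2l -ltnS prednK.
by apply: leq_trans win_size; rewrite ltn_add2l prednK.
Qed.

Lemma inW_span a : inW a0 b a -> a0 <= a <= y1 a0 b.
Proof. by case/existsP => i /eqP ->; apply: wrow_span. Qed.

Lemma inW_H a : inW a0 b a -> H a b.
Proof. by case/existsP => i /eqP ->; apply: wrow_H. Qed.

Lemma a0_inW : inW a0 b a0.
Proof. by apply/existsP; exists (Ordinal tpos); rewrite /= wrow0. Qed.

Lemma y1_lt : y1 a0 b < n. Proof. exact: ltn_ord. Qed.

Lemma good0 : goodw a0 b 0.
Proof.
apply/forallP => a; apply/implyP => /inW_H.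
by case/and4P.
Qed.


Lemma a0_span : a0 <= a0 <= y1 a0 b.
Proof. by rewrite leqnn /= -{1}wrow0 //; case/andP: (wrow_span tpos). Qed.

Lemma adjP i : stepadj a0 b i -> forall y : nat, a0 <= y <= y1 a0 b -> adj y (cj a0 b i) (cj a0 b i.+1).
Proof.
move=> /forallP F y sp.
have yn : y < n by apply: leq_ltn_trans y1_lt; case/andP: sp.
by have := F (Ordinal yn); rewrite /= sp.
Qed.

Lemma cj_B j i : goodw a0 b j -> i <= j -> cj a0 b i \in B.
Proof.
move=> g; case: i => [_|i ij]; first by case/and4P: win_H.
by case/and4P: (adjP (goodw_adj g ij) a0_span).
Qed.

Lemma cj_act j i : goodw a0 b j -> i <= j -> forall y : nat, a0 <= y <= y1 a0 b -> act (cj a0 b i) y.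
Proof.
move=> g; case: i => [_|i ij] y sp.
  apply: (@act_mid _ a0 (y1 a0 b)) => //; first by case/and4P: win_H.
  have tt : t.-1 < t by rewrite prednK.
  by case/and4P: (wrow_H tt).
by case/and4P: (adjP (goodw_adj g ij) sp).
Qed.

Lemma cj_lt j i : goodw a0 b j -> i < j -> cj a0 b i < cj a0 b i.+1.
Proof. by move=> g ij; case/and4P: (adjP (goodw_adj g ij) a0_span). Qed.

Lemma chain_back j : goodw a0 b j -> forall y : nat, a0 <= y <= y1 a0 b ->
  iter j (predc y) (cj a0 b j) = b.
Proof.
move=> g y sp.
suff : forall i, i <= j -> iter i (predc y) (cj a0 b i) = b by apply.
elim=> [//|i IH] ij.
rewrite iterSr (predc_adj (cj_B g (ltnW ij)) (cj_act g (ltnW ij) sp) (adjP (goodw_adj g ij) sp)).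
by apply: IH; apply: ltnW.
Qed.

End Win.


Lemma cj_mono a0 b j i k : win a0 b -> 0 < t -> goodw a0 b j -> i < k -> k <= j -> cj a0 b i < cj a0 b k.
Proof.
move=> Hw tp g ik; elim: k ik => [//|k IH]; rewrite ltnS leq_eqVlt => /orP [/eqP -> kj|ik kj].
  exact: (cj_lt Hw tp g kj).
apply: ltn_trans (IH ik (ltnW kj)) _; exact: (cj_lt Hw tp g kj).
Qed.

Hypothesis noK : forall A' B' : {set 'I_n}, #|A'| = t -> #|B'| = t ->
  (forall a c, a \in A' -> c \in B' -> H a c) -> False.

Lemma not_good_full a0 b : win a0 b -> 0 < t -> ~~ goodw a0 b t.-1.
Proof.
move=> Hw tp; apply/negP => g.
apply: (@noK [set wrow a0 b i | i : 'I_t] [set cj a0 b i | i : 'I_t]).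
- rewrite card_imset ?card_ord // => i j /eqP.
  rewrite /wrow nth_uniq ?uniq_s //.
  + by rewrite eqn_add2l => /eqP E; apply: val_inj.
  + by apply: leq_trans (win_size Hw); rewrite ltn_add2l.
  + by apply: leq_trans (win_size Hw); rewrite ltn_add2l.
- rewrite card_imset ?card_ord // => i j E; apply: val_inj => /=.
  have it : i <= t.-1 by rewrite -ltnS prednK.
  have jt : j <= t.-1 by rewrite -ltnS prednK.
  case: (ltngtP i j) => [ij|ji|//].
    by have := cj_mono Hw tp g ij jt; rewrite E ltnn.
  by have := cj_mono Hw tp g ji it; rewrite E ltnn.
- move=> _ _ /imsetP [i _ ->] /imsetP [k _ ->].
  have kt : k <= t.-1 by rewrite -ltnS prednK.
  have iW : inW a0 b (wrow a0 b i) by apply/existsP; exists i.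
  have := wrow_H Hw (ltn_ord i) => /and4P [aA _ _ _].
  apply/and4P; split => //.
  + exact: (cj_B Hw tp g kt).
  + by have /forallP /(_ (wrow a0 b i)) := goodw_RC g kt; rewrite iW.
  + by apply: (cj_act Hw tp g kt); apply: wrow_span.
Qed.


Definition lastc (a c : 'I_n) := H a c && [forall d : 'I_n, (c < d) ==> ~~ H a d].

Lemma lastc_uniq a c c' : lastc a c -> lastc a c' -> c = c'.
Proof.
move=> /andP [Hc /forallP Fc] /andP [Hc' /forallP Fc'].
case: (ltngtP c c') => [lt|lt|eq]; last by apply: val_inj.
  by have := Fc c'; rewrite lt Hc'.
by have := Fc' c; rewrite lt Hc.
Qed.

Definition brk (c : 'I_n) (y : nat) :=
  [&& 0 < y, act c y.-1, act c y & nextc y.-1 c != nextc y c].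

Definition R1 (p : 'I_n * 'I_n) (ja : 'I_t * 'I_n) :=
  [&& goodw p.1 p.2 ja.1, inW p.1 p.2 ja.2 & lastc ja.2 (cj p.1 p.2 ja.1)].
Definition R2 (p : 'I_n * 'I_n) (jcy : 'I_t * ('I_n * 'I_n)) :=
  [&& goodw p.1 p.2 jcy.1, jcy.2.1 == cj p.1 p.2 jcy.1, p.1 < jcy.2.2,
      jcy.2.2 <= y1 p.1 p.2 & brk jcy.2.1 jcy.2.2].

Definition Brk := [set cy : 'I_n * 'I_n | (cy.1 \in B) && brk cy.1 cy.2].
Definition T1 := setX [set: 'I_t] A.
Definition T2 := setX [set: 'I_t] Brk.

Lemma cjS a0 b j : cj a0 b j.+1 = nx a0 (cj a0 b j).
Proof. by rewrite /cj iterS. Qed.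

Lemma win_event a0 b : win a0 b -> 0 < t ->
  (exists2 ja, ja \in T1 & R1 (a0, b) ja) \/ (exists2 jcy, jcy \in T2 & R2 (a0, b) jcy).
Proof.
move=> Hw tp.
have [j jlt /andP [gj ngj1]] := @first_fail (goodw a0 b) t.-1 (good0 Hw) (not_good_full Hw tp).
have jt : j < t by apply: leq_trans jlt _; apply: leq_pred.
have aA : a0 \in A by case/and4P: (win_H Hw).
set c := cj a0 b j.
have cB : c \in B by apply: (cj_B Hw tp gj).
have cact : forall y : nat, a0 <= y <= y1 a0 b -> act c y by apply: (cj_act Hw tp gj).
have cRC : forall a, inW a0 b a -> RC a c.
  by move=> a aW; have /forallP /(_ a) := goodw_RC gj (leqnn j); rewrite aW.
case: (boolP (stepadj a0 b j)) => sa; last first.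
  move/forallPn: sa => [y]; rewrite negb_imply => /andP [sp nadj].
  case: (boolP (adj a0 c (cj a0 b j.+1))) => A0; last first.
    left; exists (Ordinal jt, a0); first by rewrite !inE aA.
    rewrite /R1 /= gj (a0_inW Hw tp) /=.
    have N : nextc a0 c = None.
      case E: (nextc a0 c) => [d|] //.
      have Ad := nextc_adj E.
      by move: A0; rewrite cjS -/c (nx_adj Ad) Ad.
    apply/andP; split.
      apply/and4P; split => //; first by apply: cRC; apply: (a0_inW Hw tp).
      by apply: cact; apply: (a0_span Hw tp).
    apply/forallP => d; apply/implyP => cd; apply/negP => /and4P [_ dB _ ad].
    exact: (nextc_None N dB cd ad).
  right.
  have [y' [ay' y'y Py' nPy']] := @first_fail_range (fun z => adj z c (cj a0 b j.+1)) a0 y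
     (proj1 (andP sp)) A0 nadj.
  have y'n : y' < n by apply: leq_ltn_trans y'y (ltn_ord y).
  have y'1 : y' <= y1 a0 b by apply: leq_trans y'y _; case/andP: sp.
  exists (Ordinal jt, (c, Ordinal y'n)).
    rewrite !inE /= cB /brk /=.
    have -> : 0 < y' by apply: leq_ltn_trans ay'.
    rewrite !cact /=; last 2 first.
    - by rewrite y'1 andbT; apply: ltnW.
    - rewrite -ltnS prednK; last by apply: leq_ltn_trans ay'.
      rewrite ay' /=; apply: leq_trans y'1; apply: leq_pred.
    rewrite (nextc_eq Py'); apply/eqP => E.
    by move: nPy'; rewrite (nextc_adj (esym E)).
  rewrite /R2 /= gj eqxx ay' y'1 /= /brk /=.
  have -> : 0 < y' by apply: leq_ltn_trans ay'.
  rewrite !cact /=; last 2 first.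
  - by rewrite y'1 andbT; apply: ltnW.
  - rewrite -ltnS prednK; last by apply: leq_ltn_trans ay'.
    rewrite ay' /=; apply: leq_trans y'1; apply: leq_pred.
  rewrite (nextc_eq Py'); apply/eqP => E.
  by move: nPy'; rewrite (nextc_adj (esym E)).
move: ngj1; rewrite /= gj sa /= => /forallPn [a]; rewrite negb_imply => /andP [aW nRC].
left; exists (Ordinal jt, a).
  by rewrite !inE /=; case/and4P: (inW_H Hw aW).
rewrite /R1 /= gj aW /=.
have asp := inW_span Hw tp aW.
apply/andP; split.
  apply/and4P; split => //; last by apply: cact.
  + by case/and4P: (inW_H Hw aW).
  + exact: cRC.
apply/forallP => d; apply/implyP => cd; apply/negP => /and4P [_ dB RCd ad].
have Aj := adjP sa asp.
move: (Aj) => /and4P [_ cc1 _ /forallP F].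
case: (leqP (cj a0 b j.+1) d) => [c1d|dc1].
  move/negP: nRC; apply.
  apply: (@RC_mid _ c d) => //; first by apply: cRC.
  by rewrite c1d andbT; apply: ltnW.
by have := F d; rewrite dB cd dc1 ad.
Qed.


Definition Win := [set p : 'I_n * 'I_n | win p.1 p.2].

Lemma inW_index a0 b a : win a0 b -> inW a0 b a -> exists2 i, i < t & index a (s b) = kk a0 b + i.
Proof.
move=> Hw /existsP [i /eqP ->]; exists i => //.
rewrite /wrow index_uniq ?uniq_s //.
by apply: leq_trans (win_size Hw); rewrite ltn_add2l.
Qed.

Lemma kk_inj b a a' : H a b -> H a' b -> kk a b = kk a' b -> a = a'.
Proof.
move=> Ha Ha' E.
by rewrite -(@nth_index _ b a (s b)) ?mem_s // -(@nth_index _ b a' (s b)) ?mem_s // -/(kk a b) E.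
Qed.

Lemma kk_lt a b : H a b -> kk a b < size (s b).
Proof. by move=> Ha; rewrite /kk index_mem mem_s. Qed.

Hypothesis tpos : 0 < t.

Lemma fiber_same_b (F : {set 'I_n * 'I_n}) (g : 'I_n * 'I_n -> 'I_n) :
  (forall p, p \in F -> p.2 = g p) -> (forall p p', p \in F -> p' \in F -> g p = g p') ->
  forall p p', p \in F -> p' \in F -> p.2 = p'.2.
Proof. by move=> E G p p' pF p'F; rewrite (E p pF) (E p' p'F); apply: G. Qed.

Lemma fiber1 ja : ja \in T1 -> #|[set p in Win | R1 p ja]| <= t + t.
Proof.
move=> _.
set F := [set p in Win | R1 p ja].
have memF : forall p, p \in F -> [/\ win p.1 p.2, goodw p.1 p.2 ja.1, inW p.1 p.2 ja.2 & lastc ja.2 (cj p.1 p.2 ja.1)].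
  by move=> p; rewrite !inE => /andP [W /and3P [g iW l]].
have sameb : forall p p', p \in F -> p' \in F -> p.2 = p'.2.
  move=> [a0 b] [a0' b'] pF p'F.
  case: (memF _ pF) => /= W g iW l; case: (memF _ p'F) => /= W' g' iW' l'.
  rewrite -(chain_back W tpos g (inW_span W tpos iW)) -(chain_back W' tpos g' (inW_span W' tpos iW')).
  by rewrite (lastc_uniq l l').
apply: (@card_near _ _ (fun p => kk p.1 p.2)).
  move=> [a0 b] [a0' b'] pF p'F /= E.
  have eb := sameb _ _ pF p'F; simpl in eb; subst b'.
  case: (memF _ pF) => /= W _ _ _; case: (memF _ p'F) => /= W' _ _ _.
  by rewrite (kk_inj (win_H W) (win_H W') E).
move=> [a0 b] [a0' b'] pF p'F /=.
have eb := sameb _ _ pF p'F; simpl in eb; subst b'.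
case: (memF _ pF) => /= W _ iW _; case: (memF _ p'F) => /= W' _ iW' _.
have [i it Ei] := inW_index W iW; have [i' it' Ei'] := inW_index W' iW'.
have : kk a0 b + i = kk a0' b + i' by rewrite -Ei -Ei'.
lia.
Qed.

Lemma fiber2 jcy : jcy \in T2 -> #|[set p in Win | R2 p jcy]| <= t + t.
Proof.
move=> _.
set F := [set p in Win | R2 p jcy].
have memF : forall p, p \in F -> [/\ win p.1 p.2, goodw p.1 p.2 jcy.1, jcy.2.1 = cj p.1 p.2 jcy.1,
   p.1 < jcy.2.2 & jcy.2.2 <= y1 p.1 p.2].
  by move=> p; rewrite !inE => /andP [W /and5P [g /eqP c l1 l2 _]].
have sameb : forall p p', p \in F -> p' \in F -> p.2 = p'.2.
  move=> [a0 b] [a0' b'] pF p'F.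
  case: (memF _ pF) => /= W g c l1 l2; case: (memF _ p'F) => /= W' g' c' l1' l2'.
  have sp : a0 <= (jcy.2.2).-1 <= y1 a0 b.
    rewrite -ltnS prednK; last by apply: leq_ltn_trans l1.
    by rewrite l1 /=; apply: leq_trans l2; apply: leq_pred.
  have sp' : a0' <= (jcy.2.2).-1 <= y1 a0' b'.
    rewrite -ltnS prednK; last by apply: leq_ltn_trans l1'.
    by rewrite l1' /=; apply: leq_trans l2'; apply: leq_pred.
  rewrite -(chain_back W tpos g sp) -(chain_back W' tpos g' sp').
  by rewrite -c -c'.
have near : forall p p', p \in F -> p' \in F -> kk p.1 p.2 < kk p'.1 p'.2 + t.
  move=> [a0 b] [a0' b'] pF p'F /=.
  have eb := sameb _ _ pF p'F; simpl in eb; subst b'.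
  case: (memF _ pF) => /= W _ _ l1 l2; case: (memF _ p'F) => /= W' _ _ l1' l2'.
  rewrite ltnNge; apply/negP => le.
  have lt1 : kk a0' b + t.-1 < kk a0 b.
    by move: le tpos; clear; lia.
  have := s_lt b lt1 (kk_lt (win_H W)).
  rewrite -/(wrow a0' b t.-1) -/(y1 a0' b) /kk nth_index ?mem_s ?(win_H W) //.
  move=> h.
  by move: h l1 l2'; clear; lia.
apply: (@card_near _ _ (fun p => kk p.1 p.2)) => //.
move=> [a0 b] [a0' b'] pF p'F /= E.
have eb := sameb _ _ pF p'F; simpl in eb; subst b'.
case: (memF _ pF) => /= W _ _ _ _; case: (memF _ p'F) => /= W' _ _ _ _.
by rewrite (kk_inj (win_H W) (win_H W') E).
Qed.


Definition chg (d : 'I_n) (y : nat) (sg : bool) :=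
  (0 < y) && (if sg then ~~ act d y.-1 && act d y else act d y.-1 && ~~ act d y).

Lemma chg_uniq d y y' sg : chg d y sg -> chg d y' sg -> y = y'.
Proof.
wlog : y y' / y < y'.
  move=> W c1 c2; case: (ltngtP y y') => [lt|lt|//]; first exact: W lt c1 c2.
  by apply/esym; apply: W lt c2 c1.
move=> lt /andP [p1 c1] /andP [p2 c2].
case: sg c1 c2 => [/andP [_ a1] /andP [n2 a2]|/andP [a1 n1] /andP [a2 n2]].
  have : act d y'.-1 by apply: (act_mid a1 a2); move: lt; clear; lia.
  by rewrite (negbTE n2).
have : act d y by apply: (act_mid a1 a2); move: lt; clear; lia.
by rewrite (negbTE n1).
Qed.

Lemma brk_card : #|Brk| <= 2 * (#|B| * 2).
Proof.
have -> : #|B| * 2 = #|setX B [set: bool]| by rewrite cardsX cardsT card_bool.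
apply: (@count_fib _ _ _ _ (fun (cy : 'I_n * 'I_n) (ds : 'I_n * bool) => chg ds.1 cy.2 ds.2 &&
   ((cy.1 == predc cy.2.-1 ds.1) || (cy.1 == predc cy.2 ds.1)))).
  move=> [c y]; rewrite inE /= => /andP [cB /and4P [yp a1 a2 ne]].
  case E1: (nextc y.-1 c) => [d1|]; case E2: (nextc y c) => [d2|]; rewrite E1 E2 in ne.
  - have A1 := nextc_adj E1; have A2 := nextc_adj E2.
    move: (A1) (A2) => /and4P [d1B cd1 ad1 /forallP F1] /and4P [d2B cd2 ad2 /forallP F2].
    case: (ltngtP d1 d2) => [lt|lt|eq]; last by move: ne; rewrite (val_inj eq) eqxx.
    + exists (d1, false); first by rewrite !inE d1B.
      rewrite /chg /= yp ad1 /=.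
      have -> : act d1 y = false by apply/negP => a; have := F2 d1; rewrite d1B cd1 lt a.
      by rewrite (predc_adj cB a1 A1) eqxx.
    + exists (d2, true); first by rewrite !inE d2B.
      rewrite /chg /= yp ad2 andbT.
      have -> : act d2 y.-1 = false by apply/negP => a; have := F1 d2; rewrite d2B cd2 lt a.
      by rewrite (predc_adj cB a2 A2) eqxx orbT.
  - have A1 := nextc_adj E1; move: (A1) => /and4P [d1B cd1 ad1 _].
    exists (d1, false); first by rewrite !inE d1B.
    rewrite /chg /= yp ad1 /=.
    have -> : act d1 y = false by apply/negP => a; exact: (nextc_None E2 d1B cd1 a).
    by rewrite (predc_adj cB a1 A1) eqxx.
  - have A2 := nextc_adj E2; move: (A2) => /and4P [d2B cd2 ad2 _].
    exists (d2, true); first by rewrite !inE d2B.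
    rewrite /chg /= yp ad2 andbT.
    have -> : act d2 y.-1 = false by apply/negP => a; exact: (nextc_None E1 d2B cd2 a).
    by rewrite (predc_adj cB a2 A2) eqxx orbT.
  - by rewrite eqxx in ne.
move=> [d sg] _.
apply: (@card_lt _ _ (fun cy : 'I_n * 'I_n => nat_of_bool (cy.1 != predc cy.2.-1 d))); last first.
  by move=> x _; case: (_ != _).
move=> [c y] [c' y']; rewrite !inE /= => /andP [_ /andP [ch o]] /andP [_ /andP [ch' o']].
have ey := val_inj (chg_uniq ch ch'); subst y'.
case: eqP o => [-> _|ne1 /= /eqP ->]; case: eqP o' => [-> _|ne2 /= /eqP ->] //.
Qed.

Definition Tl := [set p : 'I_n * 'I_n | H p.1 p.2 && (size (s p.2) < kk p.1 p.2 + t)].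

Lemma tail_card : #|Tl| <= (t + t) * #|B|.
Proof.
apply: (@count_fib _ _ _ _ (fun p b => p.2 == b)).
  by move=> [a b]; rewrite inE /= => /andP [/and4P [_ bB _ _] _]; exists b.
move=> b _.
apply: (@card_near _ _ (fun p => kk p.1 p.2)).
  move=> [a b1] [a' b2]; rewrite !inE /= => /andP [/andP [H1 _] /eqP e1] /andP [/andP [H2 _] /eqP e2] E.
  subst b1 b2; by rewrite (kk_inj H1 H2 E).
move=> [a b1] [a' b2]; rewrite !inE /= => /andP [/andP [H1 _] /eqP e1] /andP [/andP [_ L2] /eqP e2].
subst b1 b2; have := kk_lt H1; move: L2; clear; lia.
Qed.

Definition Hset := [set p : 'I_n * 'I_n | H p.1 p.2].

Lemma Hset_card : #|Hset| <= 10 * t * t * (#|A| + #|B|).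
Proof.
have sub : Hset \subset Win :|: Tl.
  apply/subsetP => [[a b]]; rewrite !inE /= /win => Hab; rewrite Hab /=.
  by case: leqP.
apply: leq_trans (subset_leq_card sub) _.
apply: leq_trans (leq_card_setU _ _) _.
have W : #|Win| <= (t + t) * #|T1| + (t + t) * #|T2|.
  apply: (count2 (R1 := R1) (R2 := R2)).
  - by move=> [a0 b]; rewrite inE /= => Hw; apply: win_event.
  - exact: fiber1.
  - exact: fiber2.
have T1c : #|T1| = t * #|A| by rewrite /T1 cardsX cardsT card_ord.
have T2c : #|T2| = t * #|Brk| by rewrite /T2 cardsX cardsT card_ord.
have Bc := brk_card.
have Tc := tail_card.
rewrite T1c T2c in W.
have W2 : #|Win| <= (t + t) * (t * #|A|) + (t + t) * (t * (2 * (#|B| * 2))).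
  apply: leq_trans W _; rewrite leq_add2l; apply: leq_mul => //; exact: leq_mul.
move: W2 Tc tpos; clear; nia.
Qed.

End Main.

Theorem corollary3p2 :
  forall t : nat, (0 < t)%N ->
  exists C : nat,
  forall (n : nat) (e : rel 'I_n) (A B : {set 'I_n}),
    bipartite_ordered e A B ->
    ~ (exists (A' B' : {set 'I_n}),
          [/\ A' \subset A, B' \subset B, #|A'| = t, #|B'| = t &
              forall a b, a \in A' -> b \in B' -> double_cherry e a b]) ->
    (#|edges e| <= C * (#|A| + #|B|))%N.
Proof.
move=> t tp; exists (10 * t * t) => n e A B [[sym irr] cover AB bip] noKK.
have disj : forall x, x \in A -> x \in B -> False.
  by move=> x xa xb; have := AB x x xa xb; rewrite ltnn.
have inB : forall x y, e x y -> x \in A -> y \in B.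
  move=> x y exy xA; case/orP: (bip x y exy) => /andP [h1 h2] //.
  by case: (disj x xA h1).
have inA : forall x y, e x y -> x \in B -> y \in A.
  move=> x y exy xB; case/orP: (bip x y exy) => /andP [h1 h2] //.
  by case: (disj x h1 xB).
have HDC : forall a c, H e A B a c -> double_cherry e a c.
  move=> a c /and4P [aA cB /andP [/existsP [v1 /andP [ev1 lv1]] /existsP [v2 /andP [ev2 lv2]]]
                      /andP [/existsP [u1 /andP [eu1 lu1]] /existsP [u2 /andP [eu2 lu2]]]].
  split; first by apply/eqP => E; subst c; exact: (disj a aA cB).
  case: (eqVneq v1 c) => [E|n1]; first by subst v1; left.
  case: (eqVneq v2 c) => [E|n2]; first by subst v2; left.
  case: (eqVneq u1 a) => [E|n3]; first by subst u1; left; rewrite sym.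
  case: (eqVneq u2 a) => [E|n4]; first by subst u2; left; rewrite sym.
  right; left; exists u1, u2, v1, v2; split; split => //.
  - rewrite ltn_neqAle lu1 andbT; move: n3; apply: contra => /eqP E; apply/eqP; exact: val_inj.
  - rewrite ltn_neqAle lu2 andbT; move: n4; apply: contra => /eqP E; apply/eqP; exact: val_inj.
  - exact: AB (inA _ _ eu2 cB) (inB _ _ ev1 aA).
  - rewrite ltn_neqAle lv1 andbT; move: n1; apply: contra => /eqP E; apply/eqP; exact: val_inj.
  - rewrite ltn_neqAle lv2 andbT; move: n2; apply: contra => /eqP E; apply/eqP; exact: val_inj.
have noK : forall A' B' : {set 'I_n}, #|A'| = t -> #|B'| = t ->
    (forall a c, a \in A' -> c \in B' -> H e A B a c) -> False.
  move=> A' B' cA cB HH; apply: noKK; exists A', B'; split => //.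
  - apply/subsetP => a aA'.
    have : 0 < #|B'| by rewrite cB.
    by case/card_gt0P => c cB'; case/and4P: (HH a c aA' cB').
  - apply/subsetP => c cB'.
    have : 0 < #|A'| by rewrite cA.
    by case/card_gt0P => a aA'; case/and4P: (HH a c aA' cB').
  - by move=> a c aA' cB'; apply: HDC; apply: HH.
apply: leq_trans (Hset_card noK tp).
apply: subset_leq_card; apply/subsetP => [[x y]]; rewrite !inE /= => /andP [xy exy].
have [xA yB] : x \in A /\ y \in B.
  case/orP: (bip x y exy) => /andP [h1 h2] //.
  by have := AB y x h2 h1; rewrite ltnNge ltnW.
apply/and4P; split => //.
  by apply/andP; split; apply/existsP; exists y; rewrite exy leqnn.
by apply/andP; split; apply/existsP; exists x; rewrite sym exy leqnn.
Qed.
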